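(* Consider a batch contextual bandit with finite context space $\mathcal{S}$, finite action space $\mathcal{A}$, context distribution $d_0$ and reward distributions $R(s,a)\in\Delta([0,R_{\max}])$. Let $\pi_b$ be a behavior policy, $\mu:=d_0\times\pi_b$, $\mathcal{F}$ a finite class of functions $\mathcal{S}\times\mathcal{A}\to[0,R_{\max}]$, and $\hat f\in\mathcal{F}$ with $\mathcal{L}_\mu(\hat f)-\min_{f\in\mathcal{F}}\mathcal{L}_\mu(f)\le\epsilon$. Let $Q^\star(s,a)=\mathbb{E}_{r\sim R(s,a)}[r]$ and $\epsilon_{\mathrm{approx}}:=\inf_{f\in\mathcal{F}}\|f-Q^\star\|_\mu^2$. Assume only that there is a constant $C<+\infty$ with $\pi_b(a\mid s)\ge1/C$ for all $s,a$. Then $$v^{\pi_{\hat f}}\ \ge\ v^\star-2\sqrt{C(\epsilon+\epsilon_{\mathrm{approx}})}.$$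
   Context: Data are generated by $s\sim d_0$, $a\sim\pi_b(\cdot\mid s)$, $r\sim R(s,a)$; $\mu$ is the joint distribution of $(s,a)$. $\mathcal{L}_\mu(f):=\mathbb{E}_{(s,a)\sim\mu,\,r\sim R(s,a)}[(f(s,a)-r)^2]$. For a distribution $\nu$ on $\mathcal{S}\times\mathcal{A}$, $\|g\|_\nu^2:=\mathbb{E}_{(s,a)\sim\nu}[g(s,a)^2]$. $\pi_f$ is the greedy policy $s\mapsto\arg\max_a f(s,a)$ (fixed tie-breaking). $v^\pi:=\mathbb{E}_{s\sim d_0,\,r\sim R(s,\pi(s))}[r]$ and $v^\star:=\mathbb{E}_{s\sim d_0}[\max_aQ^\star(s,a)]$. *)

(* Defs.v *)
From HB Require Import structures.
From mathcomp Require Import all_boot all_order all_algebra.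
From mathcomp Require Import all_classical all_reals all_analysis.
Set Implicit Arguments. Unset Strict Implicit. Unset Printing Implicit Defensive.
Import Order.TTheory GRing.Theory Num.Theory.
Local Open Scope ring_scope.
Local Open Scope classical_set_scope.

Section Bandit.
Variables (R : realType) (S A : finType).
Variables (d0 : S -> R) (pib : S -> A -> R) (Rw : S -> A -> probability R R).

Definition Qstar (s : S) (a : A) : R := Rintegral (Rw s a) setT (fun r => r).

Definition loss (f : S -> A -> R) : R :=
  \sum_(s : S) \sum_(a : A) d0 s * pib s a *
     Rintegral (Rw s a) setT (fun r => (f s a - r) ^+ 2).

Definition sqnorm_mu (g : S -> A -> R) : R :=
  \sum_(s : S) \sum_(a : A) d0 s * pib s a * (g s a) ^+ 2.

Definition value (pi : S -> A) : R :=
  \sum_(s : S) d0 s * Rintegral (Rw (s) (pi s)) setT (fun r => r).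

(* v* = E_{s~d0} max_a Q*(s,a)  (Q* >= 0, so the 0 seed is harmless) *)
Definition vstar : R :=
  \sum_(s : S) d0 s * \big[Num.max/0]_(a : A) Qstar s a.

Definition greedy (f : S -> A -> R) (pi : S -> A) : Prop :=
  forall s a, f s a <= f s (pi s).
End Bandit.

(* Main.v *)
Require Import Defs.
From HB Require Import structures.
From mathcomp Require Import all_boot all_order all_algebra.
From mathcomp Require Import all_classical all_reals all_analysis.
From mathcomp Require Import ring lra.
Import Order.TTheory GRing.Theory Num.Theory.
Local Open Scope ring_scope.
Local Open Scope classical_set_scope.
Lemma intT_D (R : realType) (P : probability R R) (D : set R)
  (mD : measurable D) (PD : P D = 1%E) (h : R -> R)
  (mh : measurable_fun setT h) :
  Rintegral P setT h = Rintegral P D h.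
Proof.
have mC : measurable (~` D) by exact: measurableC.
rewrite /Rintegral; congr fine.
rewrite -(setUv D) integral_setU //; last 2 first.
- by rewrite setUv; apply/measurable_realfun.measurable_EFinP.
- by apply/disj_setPCl.
rewrite (@null_set_integral _ _ _ P (~` D)) ?adde0 //.
- by apply/measurable_realfun.measurable_EFinP; apply: measurable_funS mh.
- by have := @probability_setC _ _ _ P _ mD; rewrite PD subee.
Qed.

Lemma intD_ok (R : realType) (P : probability R R) (D : set R)
  (mD : measurable D) (h : R -> R)
  (mh : measurable_fun setT h) (M : R) (hM : forall x, D x -> `|h x| <= M) :
  P.-integrable D (EFin \o h).
Proof.
apply: measurable_bounded_integrable => //.
- by apply: le_lt_trans (probability_le1 _ _) _ => //; rewrite ltey.
- exact: measurable_funS mh.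
- exists M; split; first exact: num_real.
  move=> y hy x Dx; apply: le_trans (hM x Dx) _; exact: ltW.
Qed.

Lemma Q_ge0 (R : realType) (P : probability R R) (Rmax : R)
  (h1 : P `[0, Rmax] = 1%E) : 0 <= Rintegral P setT (fun r => r).
Proof.
have mD : measurable (`[0, Rmax] : set R) by exact: measurable_itv.
have mid : measurable_fun setT (fun r : R => r) by exact: measurable_id.
rewrite (@intT_D _ _ `[0, Rmax]) //.
apply: Rintegral_ge0 => x /=; rewrite in_itv /= => /andP[] //.
Qed.

Lemma sq_diff (R : realType) (P : probability R R) (Rmax : R)
  (h1 : P `[0, Rmax] = 1%E) (c c' : R) :
  Rintegral P setT (fun r => (c - r) ^+ 2) - Rintegral P setT (fun r => (c' - r) ^+ 2)
  = (c - Rintegral P setT (fun r => r)) ^+ 2 - (c' - Rintegral P setT (fun r => r)) ^+ 2.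
Proof.
have mD : measurable (`[0, Rmax] : set R) by exact: measurable_itv.
have Dx : forall x, (`[0, Rmax] : set R) x -> 0 <= x <= Rmax.
  by move=> x; rewrite /= in_itv.
have msq : forall k : R, measurable_fun setT (fun r : R => (k - r) ^+ 2).
  move=> k; apply: measurable_realfun.measurable_funX.
  apply: measurable_realfun.measurable_funB => //; exact: measurable_cst.
have isq : forall k : R, P.-integrable `[0, Rmax] (EFin \o (fun r : R => (k - r) ^+ 2)).
  move=> k; apply: (@intD_ok _ _ _ mD _ (msq k) ((`|k| + Rmax) ^+ 2)).
  move=> x /Dx /andP[x0 xM].
  rewrite normrX ler_pXn2r ?nnegrE //; last by rewrite addr_ge0 // (le_trans x0 xM).
  apply: le_trans (ler_normB _ _) _; rewrite lerD2l ger0_norm //.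
have mid : measurable_fun setT (fun r : R => r) by exact: measurable_id.
have iid : P.-integrable `[0, Rmax] (EFin \o (fun r : R => r)).
  apply: (@intD_ok _ _ _ mD _ mid Rmax).
  by move=> x /Dx /andP[x0 xM]; rewrite ger0_norm.
rewrite !(@intT_D _ _ `[0, Rmax]) //; 
rewrite -RintegralB //.
rewrite (@eq_Rintegral _ _ _ _ _ (fun r => (c ^+ 2 - c' ^+ 2) + (2 * (c' - c)) * r)); last first.
  by move=> x _; ring.
have icst : forall k : R, P.-integrable `[0, Rmax] (EFin \o (fun r : R => k)).
  move=> k; apply: (@intD_ok _ _ _ mD _ (measurable_cst k) `|k|) => //.
have ikr : forall k : R, P.-integrable `[0, Rmax] (EFin \o (fun r : R => k * r)).
  move=> k; apply: (@intD_ok _ _ _ mD _ _ (`|k| * Rmax)).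
    exact: measurable_realfun.measurable_funM.
  move=> x /Dx /andP[x0 xM]; rewrite normrM ler_wpM2l // ger0_norm //.
rewrite RintegralD // RintegralZl // Rintegral_cst //.
have -> : fine (P `[0, Rmax]) = 1 by rewrite h1.
ring.
Qed.

Lemma term_le_sum (R : realType) (A : finType) (h : A -> R) (b : A) :
  (forall a, 0 <= h a) -> h b <= \sum_(a : A) h a.
Proof. by move=> h0; rewrite (bigD1 b) //= lerDl sumr_ge0. Qed.

Theorem theorem2 (R : realType) (S A : finType)
  (d0 : S -> R) (pib : S -> A -> R) (Rw : S -> A -> probability R R)
  (Rmax : R) (I : finType) (F : I -> S -> A -> R) (ihat : I)
  (eps C : R) (pihat : S -> A) :
  (forall s, 0 <= d0 s) -> \sum_(s : S) d0 s = 1 ->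
  (forall s a, 0 <= pib s a) -> (forall s, \sum_(a : A) pib s a = 1) ->
  (forall s a, Rw s a `[0, Rmax] = 1%E) ->
  (forall i s a, 0 <= F i s a <= Rmax) ->
  (forall i, loss d0 pib Rw (F ihat) - loss d0 pib Rw (F i) <= eps) ->
  0 < C -> (forall s a, pib s a >= C^-1) ->
  greedy (F ihat) pihat ->
  value d0 Rw pihat >=
    vstar d0 Rw - 2 * Num.sqrt (C * (eps +
      \big[Num.min/sqnorm_mu d0 pib (fun s a => F ihat s a - Qstar Rw s a)]_(i : I)
         sqnorm_mu d0 pib (fun s a => F i s a - Qstar Rw s a))).
Proof.
move=> d0ge0 d0sum pibge0 pibsum hRw hF hloss C0 hpib hgreedy.
set g := fun i s a => F i s a - Qstar Rw s a.
set K := sqnorm_mu d0 pib (g ihat).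
have Ldiff : forall i, loss d0 pib Rw (F ihat) - loss d0 pib Rw (F i)
    = K - sqnorm_mu d0 pib (g i).
  move=> i; rewrite /loss /K /sqnorm_mu -!sumrB; apply: eq_bigr => s _.
  rewrite -!sumrB; apply: eq_bigr => a _.
  by rewrite -!mulrBr (@sq_diff _ _ Rmax).
have eps0 : 0 <= eps by have := hloss ihat; rewrite subrr.
have Kmin : K <= eps + \big[Num.min/sqnorm_mu d0 pib (g ihat)]_(i : I)
         sqnorm_mu d0 pib (g i).
  rewrite -lerBlDl; apply: le_bigmin => [|i _].
    by rewrite lerBlDl lerDr.
  by rewrite lerBlDl -lerBlDr -Ldiff.
have Qge0 : forall s a, 0 <= Qstar Rw s a by move=> s a; exact: (@Q_ge0 _ _ Rmax).
set G := fun s => Num.sqrt (\sum_(a : A) g ihat s a ^+ 2).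
have gleG : forall s a, `|g ihat s a| <= G s.
  move=> s a; rewrite -sqrtr_sqr; apply: ler_wsqrtr.
  apply: (@term_le_sum R A (fun b => g ihat s b ^+ 2) a) => b; exact: sqr_ge0.
have hmax : forall s, \big[Num.max/0]_(a : A) Qstar Rw s a
    <= Qstar Rw s (pihat s) + 2 * G s.
  move=> s; apply: bigmax_le => [|a _].
    by rewrite addr_ge0 // mulr_ge0 // sqrtr_ge0.
  have h1 := gleG s a; have h2 := gleG s (pihat s); have h3 := hgreedy s a.
  move: h1 h2; rewrite /g => h1 h2.
  have := ler_norm (Qstar Rw s a - F ihat s a).
  rewrite distrC.
  have := ler_norm (F ihat s (pihat s) - Qstar Rw s (pihat s)).
  lra.
set X := \sum_(s : S) d0 s * G s.
have Xge0 : 0 <= X by apply: sumr_ge0 => s _; rewrite mulr_ge0 // sqrtr_ge0.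
have step1 : vstar d0 Rw - value d0 Rw pihat <= 2 * X.
  rewrite /vstar /value /X -sumrB mulr_sumr; apply: ler_sum => s _.
  rewrite -mulrBr mulrCA; apply: ler_wpM2l => //.
  have := hmax s; rewrite /Qstar; lra.
set Y := \sum_(s : S) d0 s * G s ^+ 2.
have CS : X ^+ 2 <= Y.
  have : 0 <= \sum_(s : S) d0 s * (G s - X) ^+ 2.
    by apply: sumr_ge0 => s _; rewrite mulr_ge0 // sqr_ge0.
  have -> : \sum_(s : S) d0 s * (G s - X) ^+ 2
      = \sum_(s : S) (d0 s * G s ^+ 2 - (2 * X) * (d0 s * G s) + X ^+ 2 * d0 s).
    by apply: eq_bigr => s _; ring.
  rewrite big_split sumrB /= -!mulr_sumr d0sum -/X -/Y.
  lra.
have YK : Y <= C * K.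
  rewrite /Y /K /sqnorm_mu mulr_sumr; apply: ler_sum => s _.
  rewrite /G sqr_sqrtr; last by apply: sumr_ge0 => a _; exact: sqr_ge0.
  rewrite mulr_sumr mulr_sumr; apply: ler_sum => a _.
  have hCp : 1 <= C * pib s a.
    by rewrite -(mulfV (lt0r_neq0 C0)) ler_wpM2l // ltW.
  have -> : C * (d0 s * pib s a * g ihat s a ^+ 2)
    = (d0 s * g ihat s a ^+ 2) * (C * pib s a) by ring.
  rewrite -{1}(mulr1 (d0 s * g ihat s a ^+ 2)); apply: ler_wpM2l => //.
  by rewrite mulr_ge0 // sqr_ge0.
have XleK : X <= Num.sqrt (C * K).
  rewrite -(ger0_norm Xge0) -sqrtr_sqr; apply: ler_wsqrtr; lra.
have KK : Num.sqrt (C * K) <= Num.sqrt (C * (eps +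
      \big[Num.min/sqnorm_mu d0 pib (g ihat)]_(i : I) sqnorm_mu d0 pib (g i))).
  by apply: ler_wsqrtr; rewrite ler_wpM2l // ltW.
rewrite /g in KK; lra.
Qed.
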